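(* Let $N\ge 2$, $K\ge 2$ be integers, and let $R_{\mathrm{F}}(M)$, $r_{\mathrm{C}}(M,N,K)$, $r_{\mathrm{D}}(M,N,K)$ be as in the context. (1) If $N>K$ and $(N,K)\neq(3,2)$, then $\dfrac{R_{\mathrm{F}}(M)}{r_{\mathrm{C}}(M,N,K)}\le 2$ for all $1\le M\le N$. (2) If $N\le K$, then $\dfrac{R_{\mathrm{F}}(M)}{r_{\mathrm{D}}(M,N,K)}\le e$ for all $1\le M\le N$.
   Context: Binomial convention: $\binom{n}{m}=0$ if $m>n$. $R_{\mathrm{F}}(M)$, $M\in[0,N]$, is the lower convex envelope of the points $\{(0,N)\}\cup\{(M_t,R_t):t\in\{0,\ldots,K\}\}$ with $M_t=1+\frac{t(N-1)}{K}$ and $R_t=\frac{\binom{K}{t+1}-\binom{K-\min\{N-1,K\}}{t+1}}{\binom{K}{t}}$. For positive integers $N',K$, $r_{\mathrm{C}}(M,N',K)$, $M\in[0,N']$, is the lower convex envelope of the points $\left(\frac{tN'}{K},\ \frac{\binom{K}{t+1}-\binom{K-\min\{N',K\}}{t+1}}{\binom{K}{t}}\right)$, $t\in\{0,\ldots,K\}$; and $r_{\mathrm{D}}(M,N',K):=\frac{N'-M}{M}\left(1-\left(1-\frac{M}{N'}\right)^{\min\{N',K\}}\right)$ for $M\in(0,N']$. Ratios at points where the denominator vanishes (at $M=N$) are to be read as the corresponding inequality $R_{\mathrm{F}}(M)\le c\cdot(\text{denominator})$. *)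

(* Defs.v *)
From HB Require Import structures.
From mathcomp Require Import all_boot all_order all_algebra.
From mathcomp Require Import all_classical all_reals all_analysis.
Set Implicit Arguments. Unset Strict Implicit. Unset Printing Implicit Defensive.
Import Order.TTheory GRing.Theory Num.Theory.
Local Open Scope ring_scope.
Local Open Scope classical_set_scope.

(* Lower convex envelope of the finite point set s (list of (x,y) points),
   evaluated at abscissa M: infimum of the y-values of all convex
   combinations of the points whose x-value is M. *)
Definition lce {R : realType} (s : seq (R * R)) (M : R) : R :=
  inf [set z : R | exists l : 'I_(size s) -> R,
        (forall i, 0 <= l i) /\ \sum_i l i = 1 /\
        \sum_i l i * (nth (0, 0) s i).1 = M /\
        z = \sum_i l i * (nth (0, 0) s i).2].

Definition Rval {R : realType} (m K t : nat) : R :=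
  ('C(K, t.+1)%:R - 'C(K - minn m K, t.+1)%:R) / 'C(K, t)%:R.

Definition RF {R : realType} (N K : nat) (M : R) : R :=
  lce ((0, N%:R) ::
       [seq (1 + t%:R * (N%:R - 1) / K%:R, Rval (N - 1) K t) | t <- iota 0 K.+1])
      M.

Definition rC {R : realType} (M : R) (N' K : nat) : R :=
  lce [seq (t%:R * N'%:R / K%:R, Rval N' K t) | t <- iota 0 K.+1] M.

Definition rD {R : realType} (M : R) (N' K : nat) : R :=
  (N'%:R - M) / M * (1 - (1 - M / N'%:R) ^+ minn N' K).

(* Main.v *)
Require Import Defs.
From HB Require Import structures.
From mathcomp Require Import all_boot all_order all_algebra.
From mathcomp Require Import all_classical all_reals all_analysis.
From mathcomp Require Import ring lra zify.
Import Order.TTheory GRing.Theory Num.Theory.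
Local Open Scope ring_scope.
Local Open Scope classical_set_scope.

Section LCE.
Variable R : realType.
Implicit Types (s : seq (R * R)).

Definition lset s (M : R) := [set z : R | exists l : 'I_(size s) -> R,
        (forall i, 0 <= l i) /\ \sum_i l i = 1 /\
        \sum_i l i * (nth (0, 0) s i).1 = M /\
        z = \sum_i l i * (nth (0, 0) s i).2].

Lemma lceE s M : lce s M = inf (lset s M). Proof. by []. Qed.

Lemma sum_single n a (c : R) (F : nat -> R) : (a < n)%N ->
  \sum_(i < n) (if val i == a then c else 0) * F (val i) = c * F a.
Proof.
move=> Ha; rewrite (bigD1 (Ordinal Ha)) //= eqxx big1 ?addr0 // => i Hi.
case: eqP => [E|_]; last by rewrite mul0r.
have E' : i = Ordinal Ha by apply: val_inj.
by rewrite E' eqxx in Hi.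
Qed.

Lemma lset_lb s M (al be : R) :
  (forall i, (i < size s)%N -> al * (nth (0,0) s i).1 + be <= (nth (0,0) s i).2) ->
  forall z, lset s M z -> al * M + be <= z.
Proof.
move=> H z [l [l0 [l1 [lx ->]]]].
rewrite -lx -[be]mul1r -l1 mulr_sumr mulr_suml -big_split /=.
apply: ler_sum => i _.
rewrite mulrCA -mulrDr; apply: ler_wpM2l => //; exact: H.
Qed.

Lemma lset_mem s a b (la : R) : (a < size s)%N -> (b < size s)%N -> a != b ->
  0 <= la <= 1 ->
  lset s ((1 - la) * (nth (0,0) s a).1 + la * (nth (0,0) s b).1)
         ((1 - la) * (nth (0,0) s a).2 + la * (nth (0,0) s b).2).
Proof.
move=> Ha Hb ab /andP[l0 l1].
pose l (i : 'I_(size s)) := (if val i == a then 1 - la else 0) +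
                            (if val i == b then la else 0).
have E F : \sum_(i < size s) l i * F (val i) = (1 - la) * F a + la * F b.
  rewrite /l; under eq_bigr do rewrite mulrDl.
  by rewrite big_split /= !sum_single.
exists l; split.
  move=> i; rewrite /l; case: eqP => _; case: eqP => _; lra.
split.
  rewrite -(eq_bigr _ (fun i _ => mulr1 (l i))) (E (fun _ => 1)) /=; lra.
by rewrite (E (fun i => (nth (0,0) s i).1)) (E (fun i => (nth (0,0) s i).2)).
Qed.

Lemma lce_ub s a b (la : R) M : (a < size s)%N -> (b < size s)%N -> a != b ->
  0 <= la <= 1 ->
  (1 - la) * (nth (0,0) s a).1 + la * (nth (0,0) s b).1 = M ->
  lce s M <= (1 - la) * (nth (0,0) s a).2 + la * (nth (0,0) s b).2.
Proof.
move=> Ha Hb ab hl <-; rewrite lceE.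
apply: ge_inf; last exact: lset_mem.
exists (0 * ((1 - la) * (nth (0,0) s a).1 + la * (nth (0,0) s b).1)
        - \sum_(i < size s) `|(nth (0,0) s i).2|).
apply: lset_lb => i Hi; rewrite mul0r add0r.
rewrite (bigD1 (Ordinal Hi)) //= opprD.
have : 0 <= \sum_(j < size s | j != Ordinal Hi) `|(nth (0,0) s j).2|
  by apply: sumr_ge0 => j _.
have := ler_norm (- (nth (0, 0) s i).2); rewrite normrN.
lra.
Qed.

Lemma lce_lb s M (al be : R) a b la : (a < size s)%N -> (b < size s)%N -> a != b ->
  0 <= la <= 1 ->
  (1 - la) * (nth (0,0) s a).1 + la * (nth (0,0) s b).1 = M ->
  (forall i, (i < size s)%N -> al * (nth (0,0) s i).1 + be <= (nth (0,0) s i).2) ->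
  al * M + be <= lce s M.
Proof.
move=> Ha Hb ab hl HM H; rewrite lceE; apply: lb_le_inf.
  by eexists; rewrite -HM; apply: lset_mem.
exact: lset_lb.
Qed.
End LCE.
Section P2a.
Variable R : realType.

Lemma sqle {a p : R} : 0 <= p -> p <= a -> p ^+ 2 <= a ^+ 2.
Proof. by move=> p0 pa; apply: lerXn2r; rewrite ?nnegrE //; apply: le_trans pa. Qed.

Lemma e_ge : (8/3 : R) <= expR 1.
Proof.
have -> : (1:R) = 32%:R * (1/32) by rewrite mul1r mulfV.
rewrite expRM_natl.
have h : (33/32 : R) <= expR (1/32) by have := expR_ge1Dx (1/32 : R); lra.
have h32 : (33/32 : R) ^+ 32 <= expR (1/32) ^+ 32.
  by apply: lerXn2r; rewrite ?nnegrE //; lra.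
apply: le_trans h32.
have E : forall x : R, x ^+ 32 = ((((x ^+ 2) ^+ 2) ^+ 2) ^+ 2) ^+ 2.
  by move=> x; rewrite -!exprM.
rewrite E.
have h1 : (5317/5000 : R) <= (33/32) ^+ 2 by rewrite expr2; lra.
have h2 : (2827/2500 : R) <= ((33/32) ^+ 2) ^+ 2.
  apply: le_trans (sqle _ h1); [rewrite expr2; lra | lra].
have h3 : (12787/10000 : R) <= (((33/32) ^+ 2) ^+ 2) ^+ 2.
  apply: le_trans (sqle _ h2); [rewrite expr2; lra | lra].
have h4 : (327/200 : R) <= ((((33/32) ^+ 2) ^+ 2) ^+ 2) ^+ 2.
  apply: le_trans (sqle _ h3); [rewrite expr2; lra | lra].
apply: le_trans (sqle _ h4); [rewrite expr2; lra | lra].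
Qed.
End P2a.
Section P2.
Variable R : realType.

Lemma bern2 (y : R) n : 0 <= y ->
  2 + 2 * n%:R * y + n%:R * (n%:R - 1) * y ^+ 2 <= 2 * (1 + y) ^+ n.
Proof.
move=> y0; elim: n => [|n IH]; first by rewrite expr0 mulr0 !mul0r !addr0 mulr1.
rewrite [(1 + y) ^+ n.+1]exprS -addn1 natrD.
have nn : 0 <= n%:R * (n%:R - 1 : R).
  case: n {IH} => [|n]; first by rewrite mul0r.
  by apply: mulr_ge0; rewrite ?ler0n // -addn1 natrD addrK ler0n.
have y3 : 0 <= n%:R * (n%:R - 1 : R) * y ^+ 3 by apply: mulr_ge0 => //; apply: exprn_ge0.
have h : (1 + y) * (2 + 2 * n%:R * y + n%:R * (n%:R - 1) * y ^+ 2) <= (1 + y) * (2 * (1 + y) ^+ n).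
  by apply: ler_wpM2l => //; lra.
have e : (1 + y) * (2 + 2 * n%:R * y + n%:R * (n%:R - 1) * y ^+ 2) =
   2 + 2 * (n%:R + 1%:R) * y + (n%:R + 1%:R) * (n%:R + 1%:R - 1) * y ^+ 2 + n%:R * (n%:R - 1) * y ^+ 3.
  by rewrite !exprS expr0; ring.
lra.
Qed.

Lemma qbound (M : R) (N : nat) : (2 <= N)%N -> 0 <= M <= N%:R ->
  (1 - M / N%:R) ^+ N * (M + 2) ^+ 2 <= 4.
Proof.
move=> N2 /andP[M0 MN].
have n2 : (2 : R) <= N%:R by rewrite ler_nat.
have n0 : (0 : R) < N%:R by lra.
set y := M / N%:R.
have y0 : 0 <= y by apply: divr_ge0 => //; lra.
have y1 : y <= 1 by rewrite /y ler_pdivrMr // mul1r.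
have hP := @bern2 y N y0.
have Ny : N%:R * y = M by rewrite /y mulrC divfK //; lra.
have hP2 : (M + 2) ^+ 2 <= 4 * (1 + y) ^+ N.
  have : N%:R * (N%:R - 1) * y ^+ 2 = M ^+ 2 * (1 - 1 / N%:R).
    rewrite -Ny; field; lra.
  have : M ^+ 2 * (1 - 1 / N%:R) >= M ^+ 2 / 2.
    rewrite -subr_ge0 -mulrBr; apply: mulr_ge0; first exact: sqr_ge0.
    have iN : N%:R * (1 / N%:R) = 1 :> R by field; lra.
    have t0 : 0 < 1 / N%:R :> R by apply: divr_gt0.
    have : (N%:R - 2) * (1 / N%:R) >= 0 :> R by apply: mulr_ge0; lra.
    nra.
  rewrite !expr2 in hP *; move: Ny hP; rewrite !mulrA. move=> Ny hP.
  nra.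
have q0 : 0 <= (1 - y) ^+ N by apply: exprn_ge0; lra.
have qP : (1 - y) ^+ N * (1 + y) ^+ N <= 1.
  rewrite -exprMn; apply: exprn_ile1; nra.
have : (1 - y) ^+ N * (M + 2) ^+ 2 <= (1 - y) ^+ N * (4 * (1 + y) ^+ N).
  exact: ler_wpM2l.
lra.
Qed.
End P2.
Lemma bin_union K t m : (m <= K)%N ->
  ('C(K, t.+1) <= 'C(K - m, t.+1) + m * 'C(K.-1, t))%N.
Proof.
elim: m => [|m IH] HmK; first by rewrite subn0 mul0n addn0.
have IH' := IH (ltnW HmK).
have E : (K - m = (K - m.+1).+1)%N by lia.
rewrite E binS in IH'.
have : ('C(K - m.+1, t) <= 'C(K.-1, t))%N by apply: leq_bin2l; lia.
rewrite mulSn. lia.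
Qed.

Section RV.
Variable R : realType.

Lemma binC_R (K t : nat) : (t <= K)%N ->
  ('C(K, t.+1)%:R : R) = (K%:R - t%:R) / (t%:R + 1) * 'C(K, t)%:R.
Proof.
move=> tK; have := mul_bin_left K t; move/(congr1 (fun x => x%:R : R)).
rewrite !natrM natrB // -(@natr1 R t) => E.
have t1 : (t%:R + 1 : R) != 0 by rewrite natr1 pnatr_eq0.
apply: (mulfI t1); rewrite E; field.
done.
Qed.

Lemma Cpos (K t : nat) : (t <= K)%N -> (0 : R) < 'C(K, t)%:R.
Proof. by move=> tK; rewrite ltr0n bin_gt0. Qed.

Lemma Rval_eq (m K t : nat) : (K <= m)%N -> (t <= K)%N ->
  Rval m K t = (K%:R - t%:R) / (t%:R + 1) :> R.
Proof.
move=> Km tK; rewrite /Rval (minn_idPr Km) subnn bin0n /= subr0 binC_R //.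
by rewrite mulfK // gt_eqF // Cpos.
Qed.

Lemma Rval_ub2 (m K t : nat) : (t <= K)%N ->
  Rval m K t <= (K%:R - t%:R) / (t%:R + 1) :> R.
Proof.
move=> tK; rewrite /Rval binC_R // mulrBl mulfK ?gt_eqF ?Cpos //.
rewrite lerBlDr lerDl; apply: divr_ge0; exact: ler0n.
Qed.

Lemma Rval_ub1 (m K t : nat) : (0 < K)%N -> (m <= K)%N -> (t <= K)%N ->
  Rval m K t <= m%:R * (K%:R - t%:R) / K%:R :> R.
Proof.
move=> K0 mK tK; rewrite /Rval (minn_idPl mK).
have h := @bin_union K t m mK.
have hR : ('C(K, t.+1)%:R - 'C(K - m, t.+1)%:R : R) <= m%:R * 'C(K.-1, t)%:R.
  rewrite -natrM lerBlDl -natrD ler_nat; lia.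
have hd : (K%:R * 'C(K.-1, t)%:R : R) = (K%:R - t%:R) * 'C(K, t)%:R.
  by rewrite -natrB // -!natrM mul_bin_down.
have Kn : (K%:R : R) != 0 by rewrite pnatr_eq0 -lt0n.
rewrite ler_pdivrMr ?Cpos //.
have -> : m%:R * (K%:R - t%:R) / K%:R * 'C(K, t)%:R = m%:R * 'C(K.-1, t)%:R :> R.
  have hd' : ('C(K.-1, t)%:R : R) = (K%:R - t%:R) * 'C(K, t)%:R / K%:R.
    by apply: (mulfI Kn); rewrite hd; field.
  by rewrite hd'; field.
exact: hR.
Qed.
End RV.
Section F.
Variable R : realType.
Lemma final2 (n M q Y e : R) : 1 <= M <= n -> 8/3 <= e -> 0 <= q ->
  q * (M + 2) ^+ 2 <= 4 -> Y <= n - M -> (2 <= M -> Y * (M - 1) <= n - M) ->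
  Y <= e * ((n - M) / M * (1 - q)).
Proof.
move=> /andP[M1 Mn] e83 q0 hq A1 A2.
have M0 : M != 0 by apply/eqP; lra.
have M2 : (M + 2) ^+ 2 != 0 by rewrite sqrf_eq0; apply/eqP; lra.
have M2p : 0 < (M + 2) ^+ 2 by rewrite exprn_gt0 //; lra.
have M2' : M + 2 != 0 by apply/eqP; lra.
set W := (n - M) * (M + 4) / (M + 2) ^+ 2.
have hW : W <= (n - M) / M * (1 - q).
  rewrite -subr_ge0.
  have -> : (n - M) / M * (1 - q) - W = (n - M) / (M * (M + 2) ^+ 2) * (4 - q * (M + 2) ^+ 2).
    by rewrite /W; field; rewrite M2' M0.
  apply: mulr_ge0; last lra.
  apply: divr_ge0; first lra.
  apply: mulr_ge0; lra.
have W0 : 0 <= W by apply: divr_ge0; [apply: mulr_ge0; lra | lra].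
have hY : Y <= 8/3 * W.
  case: (leP M 2) => hM.
    apply: le_trans A1 _; rewrite -subr_ge0.
    have -> : 8/3 * W - (n - M) = (n - M) * (2 - M) * (3 * M + 10) / (3 * (M + 2) ^+ 2).
      by rewrite /W; field; rewrite M2'.
    apply: divr_ge0; last lra.
    apply: mulr_ge0; last lra.
    apply: mulr_ge0; lra.
  have M1p : 0 < M - 1 by lra.
  have hY : Y <= (n - M) / (M - 1) by rewrite ler_pdivlMr //; apply: A2; lra.
  apply: le_trans hY _; rewrite -subr_ge0.
  have M1n : M - 1 != 0 by apply/eqP; lra.
  have -> : 8/3 * W - (n - M) / (M - 1) = (n - M) * (M - 2) * (5 * M + 22) / (3 * (M + 2) ^+ 2 * (M - 1)).
    by rewrite /W; field; rewrite ?M2' ?M1n.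
  apply: divr_ge0.
    apply: mulr_ge0; last lra.
    apply: mulr_ge0; lra.
  apply: mulr_ge0; last lra.
  apply: mulr_ge0; lra.
apply: le_trans hY _.
have : 8/3 * W <= e * W by apply: ler_wpM2r.
have : e * W <= e * ((n - M) / M * (1 - q)) by apply: ler_wpM2l => //; lra.
lra.
Qed.
End F.

Section P2b.
Variable R : realType.

Lemma seg (a : nat -> R) K M : (0 < K)%N -> a 0%N <= M <= a K ->
  exists2 s, (s < K)%N & a s <= M <= a s.+1.
Proof.
elim: K => [//|K IH] _ /andP[h0 hK].
case: (leP M (a K)) => hMK.
  case: K IH hK hMK => [|K] IH hK hMK.
    by exists 0%N => //; rewrite h0.
  have [s sK hs] := IH isT (introT andP (conj h0 hMK)).
  by exists s => //; apply: ltnW.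
by exists K => //; rewrite (ltW hMK) hK.
Qed.

Definition sF (N K : nat) : seq (R * R) := (0, N%:R) ::
       [seq (1 + t%:R * (N%:R - 1) / K%:R, Rval (N - 1) K t) | t <- iota 0 K.+1].

Lemma RF_sF N K M : RF N K M = lce (sF N K) M. Proof. by []. Qed.

Lemma size_sF N K : size (sF N K) = K.+2.
Proof. by rewrite /= size_map size_iota. Qed.

Lemma nth_sF N K j : (j <= K)%N ->
  nth (0,0) (sF N K) j.+1 = (1 + j%:R * (N%:R - 1) / K%:R, Rval (N - 1) K j).
Proof.
move=> jK.
transitivity (nth (0,0) [seq (1 + t%:R * (N%:R - 1) / K%:R, Rval (N - 1) K t) | t <- iota 0 K.+1] j :> R * R); first by [].
by rewrite (nth_map 0%N) ?size_iota // nth_iota.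
Qed.

Lemma conv_le (l a b A B : R) : 0 <= l <= 1 -> a <= A -> b <= B ->
  (1 - l) * a + l * b <= (1 - l) * A + l * B.
Proof.
move=> /andP[l0 l1] hA hB; apply: lerD; apply: ler_wpM2l => //; lra.
Qed.

Lemma part2 N K (M : R) : (2 <= N)%N -> (N <= K)%N -> 1 <= M <= N%:R ->
  RF N K M <= expR 1 * rD M N K.
Proof.
move=> N2 NK /andP[M1 MN].
have K0 : (0 < K)%N by lia.
have n2 : (2 : R) <= N%:R by rewrite ler_nat.
have kn : (N%:R : R) <= K%:R by rewrite ler_nat.
have kn0 : (K%:R : R) != 0 by rewrite pnatr_eq0 -lt0n.
have n10 : (N%:R - 1 : R) != 0 by apply/eqP; lra.
pose x (j : nat) : R := 1 + j%:R * (N%:R - 1) / K%:R.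
have [s sK /andP[hs hs1]] : exists2 s, (s < K)%N & x s <= M <= x s.+1.
  have x0 : x 0%N = 1 by rewrite /x; field.
  have xK : x K = N%:R by rewrite /x; field.
  by apply: (@seg x) => //; rewrite x0 xK M1 MN.
set l := (M - x s) * K%:R / (N%:R - 1).
have Ml : M = (1 - l) * x s + l * x s.+1.
  rewrite /l /x -addn1 natrD; field; by rewrite kn0 n10.
have n1p : (0 : R) < N%:R - 1 by lra.
have kp : (0 : R) < K%:R by rewrite ltr0n.
have l01 : 0 <= l <= 1.
  have hx1 : x s.+1 = x s + (N%:R - 1) / K%:R by rewrite /x -addn1 natrD; field.
  apply/andP; split.
    by rewrite /l; apply: divr_ge0; [apply: mulr_ge0; lra | lra].
  rewrite /l ler_pdivrMr // mul1r -ler_pdivlMr //; lra.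
have U : RF N K M <= (1 - l) * Rval (N-1) K s + l * Rval (N-1) K s.+1.
  rewrite RF_sF.
  have E1 := @nth_sF N K s (ltnW sK). have E2 := @nth_sF N K s.+1 sK.
  have := @lce_ub R (sF N K) s.+1 s.+2 l M; rewrite size_sF E1 E2 /=; apply => //.
  all: try exact: (esym Ml).
  - by rewrite ltnS ltnW.
  - by rewrite eqSS neq_ltn ltnSn.
set ys := Rval (N - 1) K s in U *.
set ys1 := Rval (N - 1) K s.+1 in U *.
have sR : (s%:R : R) + 1 <= K%:R by rewrite natr1 ler_nat.
have s0 : (0 : R) <= s%:R by exact: ler0n.
have hN1 : ((N - 1)%N%:R : R) = N%:R - 1 by rewrite natrB // ltnW.
have hm : (N - 1 <= K)%N by clear -NK; lia.
have ub1s : ys <= (N%:R - 1) * (K%:R - s%:R) / K%:R.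
  by rewrite -hN1; exact: (@Rval_ub1 R _ _ _ K0 hm (ltnW sK)).
have ub1s1 : ys1 <= (N%:R - 1) * (K%:R - (s%:R + 1)) / K%:R.
  by rewrite -hN1 natr1; exact: (@Rval_ub1 R _ _ _ K0 hm sK).
have ub2s : ys <= (K%:R - s%:R) / (s%:R + 1) by apply: Rval_ub2; apply: ltnW.
have ub2s1 : ys1 <= (K%:R - (s%:R + 1)) / (s%:R + 1 + 1).
  by rewrite natr1; apply: Rval_ub2.
set Y := (1 - l) * ys + l * ys1 in U *.
have A1 : Y <= N%:R - M.
  apply: le_trans (@conv_le _ _ _ _ _ l01 ub1s ub1s1) _.
  rewrite Ml /l /x -addn1 natrD; rewrite le_eqVlt; apply/orP; left; apply/eqP; field; by rewrite kn0 n10.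
have A2 : 2 <= M -> Y * (M - 1) <= N%:R - M.
  move=> M2.
  have h1 : Y <= (K%:R - s%:R - l) / (s%:R + 1).
    apply: le_trans (@conv_le _ _ _ _ _ l01 ub2s ub2s1) _.
    have : (K%:R - (s%:R + 1)) / (s%:R + 1 + 1) <= (K%:R - (s%:R + 1)) / (s%:R + 1) :> R.
      apply: ler_wpM2l; first lra.
      by rewrite lef_pV2 ?posrE; lra.
    move=> h.
    have <- : (1 - l) * ((K%:R - s%:R) / (s%:R + 1)) + l * ((K%:R - (s%:R + 1)) / (s%:R + 1))
       = (K%:R - s%:R - l) / (s%:R + 1) by field; lra.
    apply: lerD => //; apply: ler_wpM2l => //; by case/andP: l01.
  have Mv : M - 1 = (s%:R + l) * (N%:R - 1) / K%:R.
    rewrite /l /x; field; by rewrite kn0 n10.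
  have NM : N%:R - M = (K%:R - s%:R - l) * (N%:R - 1) / K%:R.
    rewrite /l /x; field; by rewrite kn0 n10.
  have Ml1 : 0 <= M - 1 by lra.
  apply: le_trans (ler_wpM2r Ml1 h1) _.
  rewrite -subr_ge0.
  have s1 : s%:R + 1 != 0 :> R by apply/eqP; lra.
  have -> : N%:R - M - (K%:R - s%:R - l) / (s%:R + 1) * (M - 1) =
     (K%:R - s%:R - l) * (N%:R - 1) * (1 - l) / (K%:R * (s%:R + 1)).
    rewrite NM Mv; field; by rewrite kn0 s1.
  case/andP: l01 => l0 l1.
  apply: divr_ge0; last by apply: mulr_ge0; lra.
  apply: mulr_ge0; last lra.
  apply: mulr_ge0; lra.
have q0 : 0 <= (1 - M / N%:R) by rewrite subr_ge0 ler_pdivrMr ?mul1r //; lra.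
rewrite /rD (minn_idPl NK).
apply: le_trans U _.
apply: final2 => //.
- by rewrite M1.
- exact: e_ge.
- exact: exprn_ge0.
- apply: qbound => //; rewrite MN andbT; lra.
Qed.
End P2b.
Section P1.
Variable R : realType.

Lemma npos (t : nat) (c : R) : 0 < c -> t%:R + c != 0.
Proof. move=> c0; rewrite gt_eqF //; have := ler0n R t; lra. Qed.

Definition ell (n k t y : R) := (k - t) / (t + 1) - (y * k / n - t) * (k + 1) / ((t + 1) * (t + 2)).

Definition sC (N K : nat) : seq (R * R) :=
  [seq (t%:R * N%:R / K%:R, Rval N K t) | t <- iota 0 K.+1].

Lemma rC_sC M N K : rC M N K = lce (sC N K) M. Proof. by []. Qed.

Lemma nth_sC N K j : (j <= K)%N ->
  nth (0,0) (sC N K) j = (j%:R * N%:R / K%:R, Rval N K j).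
Proof. by move=> jK; rewrite (nth_map 0%N) ?size_iota // nth_iota. Qed.

Lemma consec (i t : nat) : 0 <= (i%:R - t%:R) * (i%:R - t%:R - 1) :> R.
Proof.
case: (leqP i t) => h.
  have : (i%:R : R) <= t%:R by rewrite ler_nat.
  move=> h'; apply: mulr_le0; lra.
have : (t%:R + 1 : R) <= i%:R by rewrite natr1 ler_nat.
move=> h'; apply: mulr_ge0; lra.
Qed.

Lemma rC_lb (N K t : nat) (M : R) : (K < N)%N -> (0 < K)%N -> 0 <= M <= N%:R ->
  ell N%:R K%:R t%:R M <= rC M N K.
Proof.
move=> KN K0 /andP[M0 MN].
have n0 : (N%:R : R) != 0 by rewrite pnatr_eq0; lia.
have k0 : (K%:R : R) != 0 by rewrite pnatr_eq0; lia.
have t1 : (t%:R + 1 : R) != 0 by rewrite natr1 pnatr_eq0.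
have t2 : (t%:R + 2 : R) != 0 by apply: npos.
have np : (0 : R) < N%:R by rewrite ltr0n; lia.
set al := - (K%:R / N%:R) * (K%:R + 1) / ((t%:R + 1) * (t%:R + 2)) : R.
set be := (K%:R - t%:R) / (t%:R + 1) + t%:R * (K%:R + 1) / ((t%:R + 1) * (t%:R + 2)) : R.
have -> : ell N%:R K%:R t%:R M = al * M + be.
  by rewrite /ell /al /be; field; rewrite n0 t1 t2.
rewrite rC_sC.
have sz : size (sC N K) = K.+1 by rewrite size_map size_iota.
apply: (@lce_lb R (sC N K) M al be 0%N K (M / N%:R)).
- by rewrite sz.
- by rewrite sz.
- by rewrite eq_sym -lt0n.
- apply/andP; split; first by apply: divr_ge0; lra.
  by rewrite ler_pdivrMr // mul1r.
- rewrite !nth_sC //= mul0r mul0r mulr0 add0r; field.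
  by rewrite n0 k0.
- move=> i; rewrite sz ltnS => iK; rewrite nth_sC //= Rval_eq //; last exact: ltnW.
  rewrite -subr_ge0.
  have i1 : (i%:R + 1 : R) != 0 by rewrite natr1 pnatr_eq0.
  have -> : (K%:R - i%:R) / (i%:R + 1) - (al * (i%:R * N%:R / K%:R) + be) =
     (K%:R + 1) * ((i%:R - t%:R) * (i%:R - t%:R - 1)) / ((i%:R + 1) * (t%:R + 1) * (t%:R + 2)).
    rewrite /al /be; field; by rewrite i1 t1 t2 k0 n0.
  have k1 : (0 : R) <= K%:R + 1 by apply: addr_ge0; rewrite ?ler0n.
  apply: divr_ge0; first by apply: mulr_ge0; [exact: k1|exact: consec].
  apply: mulr_ge0; [apply: mulr_ge0|]; apply: addr_ge0; rewrite ?ler0n //.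
Qed.
End P1.

Section P1b.
Variable R : realType.

Lemma affine_nonneg (g : R -> R) a b M :
  (forall x y u, g ((1 - u) * x + u * y) = (1 - u) * g x + u * g y) ->
  a <= M <= b -> 0 <= g a -> 0 <= g b -> 0 <= g M.
Proof.
move=> gA /andP[aM Mb] ga gb.
case: (ltP a b) => ab; last by have -> : M = a by lra.
have ba : b - a != 0 by apply/eqP; lra.
set u := (M - a) / (b - a).
have -> : M = (1 - u) * a + u * b by rewrite /u; field.
have u0 : 0 <= u by apply: divr_ge0; lra.
have u1 : u <= 1 by rewrite /u ler_pdivrMr ?mul1r; lra.
rewrite gA; apply: addr_ge0; apply: mulr_ge0; lra.
Qed.

Lemma part1 N K (M : R) : (2 <= K)%N -> (K < N)%N -> (N, K) <> (3%N, 2%N) ->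
  1 <= M <= N%:R -> RF N K M <= 2 * rC M N K.
Proof.
move=> K2 KN NK32 /andP[M1 MN].
have N2 : (2 <= N)%N by lia.
have K0 : (0 < K)%N by lia.
have n2 : (2 : R) <= N%:R by rewrite ler_nat.
have kn1 : (K%:R + 1 : R) <= N%:R by rewrite natr1 ler_nat.
have k2 : (2 : R) <= K%:R by rewrite ler_nat.
have kn0 : (K%:R : R) != 0 by rewrite pnatr_eq0 -lt0n.
have n0 : (N%:R : R) != 0 by apply/eqP; lra.
have n10 : (N%:R - 1 : R) != 0 by apply/eqP; lra.
have n1p : (0 : R) < N%:R - 1 by lra.
have kp : (0 : R) < K%:R by rewrite ltr0n.
have RvF : forall j, (j <= K)%N -> Rval (N - 1) K j = (K%:R - j%:R) / (j%:R + 1) :> R.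
  by move=> j jK; apply: Rval_eq => //; clear -KN; lia.
pose x (j : nat) : R := 1 + j%:R * (N%:R - 1) / K%:R.
have [s sK /andP[hs hs1]] : exists2 s, (s < K)%N & x s <= M <= x s.+1.
  have x0 : x 0%N = 1 by rewrite /x; field.
  have xK : x K = N%:R by rewrite /x; field.
  by apply: (@seg R x) => //; rewrite x0 xK M1 MN.
have sR : (s%:R : R) + 1 <= K%:R by rewrite natr1 ler_nat.
have s0 : (0 : R) <= s%:R by exact: ler0n.
have s1 : (s%:R + 1 : R) != 0 by apply: npos.
have s2 : (s%:R + 2 : R) != 0 by apply: npos.
have s3 : (s%:R + 1 + 2 : R) != 0 by rewrite -addrA; apply: npos.
have s1' : (s%:R + 1 + 1 : R) != 0 by rewrite -addrA; apply: npos.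
have s3x : (s%:R + 3 : R) != 0 by apply: npos.
have M0N : 0 <= M <= N%:R by rewrite MN andbT; lra.
have [[s00 NK1] | hgen] : (s = 0 /\ N = K.+1)%N \/ ((0 < s)%N \/ (K.+2 <= N)%N) by clear -KN; lia.
  subst s N.
  have K3 : (3 <= K)%N.
    case: (K =P 2%N) => [E|/eqP H]; last by clear -K2 H; lia.
    by exfalso; apply: NK32; rewrite E.
  have k3 : (3 : R) <= K%:R by rewrite ler_nat.
  have hn : (K.+1%:R : R) = K%:R + 1 by rewrite natr1.
  have x1 : x 1%N = 2 by rewrite /x hn; field.
  have M2 : M <= 2 by rewrite -x1.
  have U : RF K.+1 K M <= (1 - M / 2) * K.+1%:R + (M / 2) * Rval (K.+1 - 1) K 1.
    rewrite RF_sF.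
    have E2 := @nth_sF R K.+1 K 1 (ltnW K2).
    have := @lce_ub R (sF R K.+1 K) 0 2 (M / 2) M; rewrite size_sF E2 /=; apply => //.
    - apply/andP; split; lra.
    - by rewrite hn; field.
  rewrite RvF // in U.
  pose P (y : R) := (1 - y / 2) * (K%:R + 1) + (y / 2) * ((K%:R - 1) / 2).
  have UP : RF K.+1 K M <= P M.
    apply: le_trans U _; rewrite le_eqVlt; apply/orP; left; apply/eqP.
    by rewrite /P hn; field.
  have k0' : (K%:R + 1 : R) != 0 by apply: npos.
  pose c1 : R := K.+1%:R / K%:R.
  have gc1 : forall t : R, t = 0 \/ t = 1 -> 2 * @ell R K.+1%:R K%:R t c1 - P c1 = (K%:R - 1) * (K%:R - 3) / (4 * K%:R).
    move=> t [->|->]; rewrite /ell /P /c1 hn; field; by rewrite ?kn0 ?k0'.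
  have gc1p : 0 <= (K%:R - 1) * (K%:R - 3) / (4 * K%:R) :> R.
    apply: divr_ge0; [apply: mulr_ge0; lra | lra].
  case: (leP M c1) => hc.
    have lb := @rC_lb R K.+1 K 0 M KN K0 M0N.
    have g_ok : 0 <= 2 * @ell R K.+1%:R K%:R 0%:R M - P M.
      apply: (@affine_nonneg (fun y => 2 * @ell R K.+1%:R K%:R 0%:R y - P y) 1 c1 M).
      - by move=> a b u; rewrite /ell /P; ring.
      - by rewrite M1 hc.
      - have -> : 2 * @ell R K.+1%:R K%:R 0%:R 1 - P 1 = (K%:R - 1) / 4.
          rewrite /ell /P hn; field; by rewrite ?kn0 ?k0'.
        lra.
      - by rewrite /= gc1 //; left.
    lra.
  have lb := @rC_lb R K.+1 K 1 M KN K0 M0N.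
  have g_ok : 0 <= 2 * @ell R K.+1%:R K%:R 1%:R M - P M.
    apply: (@affine_nonneg (fun y => 2 * @ell R K.+1%:R K%:R 1%:R y - P y) c1 2 M).
    - by move=> a b u; rewrite /ell /P; ring.
    - by rewrite M2 (ltW hc).
    - by rewrite /= gc1 //; right.
    - have -> : 2 * @ell R K.+1%:R K%:R 1%:R 2 - P 2 = (K%:R - 1) / 6.
        rewrite /ell /P hn; field; by rewrite ?kn0 ?k0'.
      lra.
  lra.
set l := (M - x s) * K%:R / (N%:R - 1).
have Ml : M = (1 - l) * x s + l * x s.+1.
  by rewrite /l /x -addn1 natrD; field; by rewrite kn0 n10.
have l01 : 0 <= l <= 1.
  have hx1 : x s.+1 = x s + (N%:R - 1) / K%:R by rewrite /x -addn1 natrD; field.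
  apply/andP; split.
    by rewrite /l; apply: divr_ge0; [apply: mulr_ge0; lra | lra].
  rewrite /l ler_pdivrMr // mul1r -ler_pdivlMr //; lra.
have U : RF N K M <= (1 - l) * Rval (N-1) K s + l * Rval (N-1) K s.+1.
  rewrite RF_sF.
  have E1 := @nth_sF R N K s (ltnW sK). have E2 := @nth_sF R N K s.+1 sK.
  have := @lce_ub R (sF R N K) s.+1 s.+2 l M; rewrite size_sF E1 E2 /=; apply => //.
  all: try exact: (esym Ml).
  - by rewrite ltnS ltnW.
  - by rewrite eqSS neq_ltn ltnSn.
rewrite RvF ?RvF // in U; last exact: ltnW.
set chF := fun y : R => (K%:R - s%:R) / (s%:R + 1) -
   ((y - 1) * K%:R / (N%:R - 1) - s%:R) * (K%:R + 1) / ((s%:R + 1) * (s%:R + 2)).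
have UF : RF N K M <= chF M.
  apply: le_trans U _; rewrite le_eqVlt; apply/orP; left; apply/eqP; rewrite /chF /l /x natr1 -[s.+1]addn1 natrD.
  by field; rewrite s1 s2 n10 kn0.
have hB : 0 <= (K%:R - s%:R - 1) * ((N%:R - 1) * (s%:R + 1) - (K%:R + 1)) /
                ((s%:R + 2) * (N%:R - 1) * (s%:R + 1)) :> R.
  have h1 : 0 <= (N%:R - 1) * (s%:R + 1) - (K%:R + 1) :> R.
    case: hgen => [sp | Np].
      have : (1 : R) <= s%:R by rewrite ler1n.
      move=> hs'; nra.
    have : (K%:R + 1 + 1 : R) <= N%:R by rewrite !natr1 ler_nat.
    move=> hn'; nra.
  apply: divr_ge0; first by apply: mulr_ge0 => //; lra.
  apply: mulr_ge0; first (apply: mulr_ge0; lra).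
  lra.
have M0 : 0 <= M by lra.
pose c1 : R := (s%:R + 1) * N%:R / K%:R.
case: (leP M c1) => hc.
  have lb := @rC_lb R N K s M KN K0 M0N.
  have g_ok : 0 <= 2 * @ell R N%:R K%:R s%:R M - chF M.
    apply: (@affine_nonneg (fun y => 2 * @ell R N%:R K%:R s%:R y - chF y) (x s) c1 M).
    - by move=> a b u; rewrite /ell /chF; ring.
    - by rewrite hs hc.
    - have -> : 2 * @ell R N%:R K%:R s%:R (x s) - chF (x s) =
          (K%:R - s%:R) * (N%:R * (s%:R + 2) - 2 * (K%:R + 1)) /
          (N%:R * (s%:R + 1) * (s%:R + 2)).
        by rewrite /ell /chF /x; field; rewrite ?s1 ?s2 ?n0 ?kn0 ?n10.
      have : 0 <= N%:R * (s%:R + 2) - 2 * (K%:R + 1) :> R by nra.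
      move=> h; apply: divr_ge0; first by apply: mulr_ge0 => //; lra.
      apply: mulr_ge0; first (apply: mulr_ge0; lra).
      lra.
    - have -> : 2 * @ell R N%:R K%:R s%:R c1 - chF c1 =
          (K%:R - s%:R - 1) * ((N%:R - 1) * (s%:R + 1) - (K%:R + 1)) /
                ((s%:R + 2) * (N%:R - 1) * (s%:R + 1)).
        by rewrite /ell /chF /c1; field; rewrite ?s1 ?s2 ?n0 ?kn0 ?n10.
      exact: hB.
  lra.
have lb := @rC_lb R N K s.+1 M KN K0 M0N.
rewrite -natr1 in lb.
have g_ok : 0 <= 2 * @ell R N%:R K%:R (s%:R + 1) M - chF M.
  apply: (@affine_nonneg (fun y => 2 * @ell R N%:R K%:R (s%:R + 1) y - chF y) c1 (x s.+1) M).
  - by move=> a b u; rewrite /ell /chF; ring.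
  - by rewrite hs1 (ltW hc).
  - have -> : 2 * @ell R N%:R K%:R (s%:R + 1) c1 - chF c1 =
          (K%:R - s%:R - 1) * ((N%:R - 1) * (s%:R + 1) - (K%:R + 1)) /
                ((s%:R + 2) * (N%:R - 1) * (s%:R + 1)).
      by rewrite /ell /chF /c1; field; rewrite ?s1 ?s2 ?s3 ?s1' ?n0 ?kn0 ?n10.
    exact: hB.
  - have -> : 2 * @ell R N%:R K%:R (s%:R + 1) (x s.+1) - chF (x s.+1) =
          (K%:R - s%:R - 1) * (N%:R * (s%:R + 3) - 2 * (K%:R + 1)) /
          (N%:R * (s%:R + 2) * (s%:R + 3)).
      by rewrite /ell /chF /x -natr1; field; rewrite ?s1 ?s2 ?s3 ?s3x ?s1' ?n0 ?kn0 ?n10.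
    have : 0 <= N%:R * (s%:R + 3) - 2 * (K%:R + 1) :> R by nra.
    move=> h; apply: divr_ge0; first by apply: mulr_ge0 => //; lra.
    apply: mulr_ge0; first (apply: mulr_ge0; lra).
    lra.
lra.
Qed.
End P1b.

Local Close Scope classical_set_scope.

Theorem lemma5 (R : realType) (N K : nat) :
  (2 <= N)%N -> (2 <= K)%N ->
  ((K < N)%N -> (N, K) <> (3%N, 2%N) ->
     forall M : R, 1 <= M <= N%:R -> RF N K M <= 2 * rC M N K) /\
  ((N <= K)%N ->
     forall M : R, 1 <= M <= N%:R -> RF N K M <= expR 1 * rD M N K).
Proof.
move=> N2 K2; split.
  by move=> KN NK32 M HM; apply: part1.
by move=> NK M HM; apply: part2.
Qed.
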